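(* Let $W=\mathrm{inv}(\pi)$ and let $W^\ast=\mathrm{inv}(\pi^\ast)$, where $\pi^\ast$ is constructed from $\pi$ as described in the context. Then $W^\ast$ has the $W$-size biased distribution.
   Context: Let $h\ge 2$, let $n_1,\dots,n_h$ be positive integers, $n=n_1+\dots+n_h\ge 4$, and let $\pi$ be a uniformly distributed permutation of the multiset $\{1^{n_1},\dots,h^{n_h}\}$ (a sequence $(\pi(1),\dots,\pi(n))$ in which each $a$ occurs $n_a$ times, all such sequences equally likely). $\mathrm{inv}(\pi)$ is the number of pairs $i<j$ with $\pi(i)>\pi(j)$. For a nonnegative integrable random variable $W$ with $\mathbb{E}W>0$, a random variable $W^\ast$ has the $W$-size biased distribution if $\mathbb{E}(Wf(W))=\mathbb{E}W\,\mathbb{E}f(W^\ast)$ for all continuous $f$ for which the left side exists. Construction of $\pi^\ast$: Let $I$ be uniformly distributed over pairs $(i,j)$ with $1\le i<j\le n$; let $J=(a,b)$, for $h\ge a>b\ge 1$, with probability $n_an_b/\sum_{c<d}n_cn_d$; $\pi,I,J$ are independent. If $I=(i,j)$ and $\pi(i)>\pi(j)$, set $\pi^\ast=\pi$. If $I=(i,j)$, $\pi(i)\le\pi(j)$ and $J=(a,b)$: choose $i^\ast$ uniformly from $\{k:\pi(k)=a\}$ and $j^\ast$ uniformly from $\{k:\pi(k)=b\}$, independently of each other and of all else. Then: (1) if $\{i,j\}\cap\{i^\ast,j^\ast\}=\emptyset$, or $i=i^\ast,j\ne j^\ast$, or $i\ne i^\ast,j=j^\ast$, obtain $\pi^\ast$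 from $\pi$ by exchanging the entries at positions $i$ and $i^\ast$ and exchanging the entries at positions $j$ and $j^\ast$; (2) if $i=j^\ast$ and $j=i^\ast$, obtain $\pi^\ast$ by exchanging the entries at positions $i$ and $j$; (3) if $i=j^\ast$, $j\ne i^\ast$, set $\pi^\ast(i)=\pi(i^\ast)$, $\pi^\ast(j)=\pi(i)$, $\pi^\ast(i^\ast)=\pi(j)$, and $\pi^\ast(k)=\pi(k)$ for $k\notin\{i,j,i^\ast\}$; (4) if $i\ne j^\ast$, $j=i^\ast$, set $\pi^\ast(i)=\pi(j)$, $\pi^\ast(j)=\pi(j^\ast)$, $\pi^\ast(j^\ast)=\pi(i)$, and $\pi^\ast(k)=\pi(k)$ for $k\notin\{i,j,j^\ast\}$. *)

(* Defs.v *)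
From HB Require Import structures.
From mathcomp Require Import all_boot all_order all_algebra.
From mathcomp Require Import all_classical all_reals topology normedtype.
Set Implicit Arguments. Unset Strict Implicit. Unset Printing Implicit Defensive.
Import Order.TTheory GRing.Theory Num.Theory.

(* Letters 1..h are represented by 'I_h (letter a+1 <-> ordinal a; order preserved).
   Positions 1..n are represented by 'I_n. A word is a finite function 'I_n -> 'I_h. *)

Section Defs.
Variables (h n : nat) (ns : 'I_h -> nat).

Definition word := {ffun 'I_n -> 'I_h}.

Definition inv (p : word) : nat :=
  #|[set ij : 'I_n * 'I_n | (ij.1 < ij.2)%N && (p ij.2 < p ij.1)%N]|.

Definition pos (p : word) (a : 'I_h) : {set 'I_n} := [set k | p k == a].

Definition msperm : {set word} := [set p : word | [forall a, #|pos p a| == ns a]].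

Definition pairsI : {set 'I_n * 'I_n} := [set ij : 'I_n * 'I_n | (ij.1 < ij.2)%N].
Definition pairsJ : {set 'I_h * 'I_h} := [set ab : 'I_h * 'I_h | (ab.2 < ab.1)%N].

Definition swap (p : word) (i k : 'I_n) : word :=
  [ffun x => if x == i then p k else if x == k then p i else p x].

(* the construction of pi^* given pi, I = (i,j), istar, jstar (case pi(i) <= pi(j)) *)
Definition construct (p : word) (i j ist jst : 'I_n) : word :=
  if (i == jst) && (j == ist) then swap p i j
  else if i == jst then
    [ffun x => if x == i then p ist else if x == j then p i
               else if x == ist then p j else p x]
  else if j == ist then
    [ffun x => if x == i then p j else if x == j then p jst
               else if x == jst then p i else p x]
  else swap (swap p i ist) j jst.

(* Sample space: tuples (pi, I, J, istar, jstar) *)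
Definition Omega := (word * ('I_n * 'I_n) * ('I_h * 'I_h) * 'I_n * 'I_n)%type.

Definition pistar (w : Omega) : word :=
  let: (p, ij, ab, ist, jst) := w in
  if (p ij.2 < p ij.1)%N then p else construct p ij.1 ij.2 ist jst.

Section Prob.
Variable R : realType.
Local Open Scope ring_scope.

Definition Zw : R := \sum_(ab in pairsJ) ((ns ab.1)%:R * (ns ab.2)%:R).

Definition mass (w : Omega) : R :=
  let: (p, ij, ab, ist, jst) := w in
  ((p \in msperm)%:R / #|msperm|%:R) *
  ((ij \in pairsI)%:R / #|pairsI|%:R) *
  ((ab \in pairsJ)%:R * ((ns ab.1)%:R * (ns ab.2)%:R) / Zw) *
  ((ist \in pos p ab.1)%:R / #|pos p ab.1|%:R) *
  ((jst \in pos p ab.2)%:R / #|pos p ab.2|%:R).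

Definition Exp (X : Omega -> R) : R := \sum_(w : Omega) mass w * X w.

Definition W (w : Omega) : R := (inv w.1.1.1.1)%:R.
Definition Wstar (w : Omega) : R := (inv (pistar w))%:R.

End Prob.
End Defs.

(* Main.v *)
Require Import Defs.
From HB Require Import structures.
From mathcomp Require Import all_boot all_order all_algebra.
From mathcomp Require Import all_classical all_reals topology normedtype.
From mathcomp Require Import ring lra fingroup perm.
Import Order.TTheory GRing.Theory Num.Theory.
Import numFieldNormedType.Exports.
Set Implicit Arguments. Unset Strict Implicit. Unset Printing Implicit Defensive.
Definition act h n (p : word h n) (r : {perm 'I_n}) : word h n := [ffun x => p (r x)].

Lemma actE h n (p : word h n) r x : act p r x = p (r x).
Proof. by rewrite ffunE. Qed.

Lemma pos_act h n (p : word h n) r a : pos (act p r) a = r @^-1: pos p a.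
Proof. by apply/setP=> x; rewrite !inE ffunE. Qed.

Lemma ms_act h n ns (p : word h n) r :
  (act p r \in msperm n ns) = (p \in msperm n ns).
Proof.
rewrite !inE; apply/eq_forallb => a.
by rewrite pos_act card_preimset //; exact: perm_inj.
Qed.

Lemma ms_actF h n (ns : 'I_h -> nat) (p : word h n) r :
  [forall a, #|pos (act p r) a| == ns a] = [forall a, #|pos p a| == ns a].
Proof. by have := ms_act ns p r; rewrite !inE. Qed.

Lemma act_inj h n (r : {perm 'I_n}) : injective (fun p : word h n => act p r).
Proof.
move=> p q E; apply/ffunP => x.
by have := congr1 (fun f : word h n => f (r^-1 x)%g) E; rewrite /= !ffunE permKV.
Qed.

Lemma act_mul h n (p : word h n) r s : act (act p r) s = act p (s * r)%g.
Proof. by apply/ffunP => x; rewrite !ffunE permM. Qed.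

Lemma swap_act h n (p : word h n) i k : swap p i k = act p (tperm i k).
Proof.
apply/ffunP => x; rewrite !ffunE.
case: tpermP => [->|->|/eqP/negPf-> /eqP/negPf->] //; rewrite ?eqxx //.
by case: eqP => // ->.
Qed.

Lemma count_enumT (T : finType) (a : pred T) : count a (enum T) = #|a|.
Proof. by rewrite -sum1_count big_enum_cond /= sum1_card. Qed.

Ltac crush := repeat (rewrite ?ffunE /=; (case: eqP => ?; subst)); try congruence.

Lemma cons_i h n (p : word h n) i j ist jst :
  i <> j -> construct p i j ist jst i = p ist.
Proof. move=> ?; rewrite /construct /swap; crush. Qed.

Lemma cons_j h n (p : word h n) i j ist jst :
  i <> j -> p jst <> p ist -> construct p i j ist jst j = p jst.
Proof. move=> ? ?; rewrite /construct /swap; crush. Qed.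

Lemma cons_act h n (p : word h n) i j ist jst :
  i <> j -> p jst <> p ist -> exists r, construct p i j ist jst = act p r.
Proof.
move=> ? ?; rewrite /construct.
case: eqP => [Ei|Ni]; case: eqP => [Ej|Nj] /=.
- by exists (tperm i j); rewrite swap_act.
- exists (tperm i ist * tperm i j)%g; rewrite -act_mul -!swap_act /swap.
  apply/ffunP => x; subst; crush.
- exists (tperm j jst * tperm i j)%g; rewrite -act_mul -!swap_act /swap.
  apply/ffunP => x; subst; crush.
- by exists (tperm j jst * tperm i ist)%g; rewrite -act_mul -!swap_act.
Qed.

Lemma cons_equiv h n (p : word h n) (r : {perm 'I_n}) i j ist jst :
  r i = i -> r j = j ->
  construct (act p r) i j (r^-1 ist)%g (r^-1 jst)%g = act (construct p i j ist jst) r.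
Proof.
move=> ri rj.
have ri' : (r^-1)%g i = i by rewrite -{1}ri permK.
have rj' : (r^-1)%g j = j by rewrite -{1}rj permK.
have F3 : forall y z, ((r^-1)%g y == (r^-1)%g z) = (y == z).
  by move=> y z; rewrite (inj_eq (@perm_inj _ _)).
have G1 : forall y, ((r^-1)%g y == i) = (y == i) by move=> y; rewrite -[X in _ == X]ri' F3.
have G2 : forall y, ((r^-1)%g y == j) = (y == j) by move=> y; rewrite -[X in _ == X]rj' F3.
have H1 : forall y, (i == (r^-1)%g y) = (i == y) by move=> y; rewrite eq_sym G1 eq_sym.
have H2 : forall y, (j == (r^-1)%g y) = (j == y) by move=> y; rewrite eq_sym G2 eq_sym.
apply/ffunP => x; have [y ->] : exists y, x = (r^-1)%g y by exists (r x); rewrite permK.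
rewrite actE permKV /construct !H1 !H2.
case: ifP => _; last case: ifP => _; last case: ifP => _;
  rewrite /swap !ffunE ?G1 ?G2 ?F3 ?actE ?permKV ?ri ?rj ?H1 ?H2 //.
Qed.

Lemma count_tuple h n (s : word h n) c : count_mem c [tuple s x | x < n] = #|pos s c|.
Proof.
rewrite -(map_tnth_enum [tuple s x | x < n]) count_map count_enumT.
by apply: eq_card => x; rewrite !inE /= tnth_mktuple.
Qed.

Lemma perm2 n (i j k l : 'I_n) : i != j -> k != l ->
  exists r : {perm 'I_n}, r i = k /\ r j = l.
Proof.
move=> nij nkl.
exists (tperm i k * tperm (tperm i k j) l)%g; rewrite !permM !tpermL; split=> //.
apply: tpermD; last by rewrite eq_sym.
apply/eqP => E.
have : tperm i k j = tperm i k i by rewrite tpermL E.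
by move/perm_inj => /eqP; rewrite eq_sym (negPf nij).
Qed.

Lemma trans_ms h n ns (s s' : word h n) i j :
  s \in msperm n ns -> s' \in msperm n ns -> s i = s' i -> s j = s' j -> i != j ->
  exists r : {perm 'I_n}, [/\ r i = i, r j = j & s' = act s r].
Proof.
move=> ms ms' Ei Ej nij.
have [r0 E0] : exists r0 : {perm 'I_n}, s' = act s r0.
  have : perm_eq [tuple s' x | x < n] [tuple s x | x < n].
    apply/allP => c _; rewrite /= !count_tuple.
    move: ms ms'; rewrite !inE => /forallP/(_ c)/eqP-> /forallP/(_ c)/eqP->.
    by [].
  case/tuple_permP => r0 E; exists r0; apply/ffunP => x.
  have := congr1 (fun t => nth (s x) t x) E.
  by rewrite /= !nth_mktuple tnth_mktuple ffunE.
have F0 : forall x, s (r0 x) = s' x by move=> x; rewrite E0 ffunE.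
pose r1 := (r0 * tperm (r0 i) i)%g.
have r1i : r1 i = i by rewrite permM tpermL.
have F1 : forall x, s (r1 x) = s' x.
  by move=> x; rewrite permM -F0; case: tpermP => [->|->|//]; rewrite F0 Ei.
pose r2 := (r1 * tperm (r1 j) j)%g.
exists r2; split.
- rewrite permM r1i tpermD // ?(eq_sym j) //.
  apply/eqP => E; have : r1 j = r1 i by rewrite E r1i.
  by move/perm_inj => E'; move: nij; rewrite E' eqxx.
- by rewrite permM tpermL.
by apply/ffunP => x; rewrite ffunE permM -F1; case: tpermP => [->|->|//]; rewrite F1 Ej.
Qed.

Lemma sum_bool (T : finType) (b : pred T) : (\sum_(x : T) (b x : nat))%N = #|b|.
Proof. rewrite -sum1_card [RHS]big_mkcond; apply: eq_bigr => x _; by rewrite unfold_in; case: (b x). Qed.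

Definition cls h n ns (i j : 'I_n) (a b : 'I_h) : {set word h n} :=
  [set s : word h n | [&& s \in msperm n ns, s i == a & s j == b]].

Lemma cls_sym h n ns (i j k l : 'I_n) (a b : 'I_h) : i != j -> k != l ->
  #|cls ns i j a b| = #|cls ns k l a b|.
Proof.
move=> nij nkl; have [q [qk ql]] := perm2 nkl nij.
rewrite -(card_preimset (cls ns k l a b) (@act_inj h n q)).
by apply: eq_card => s; rewrite !inE ms_actF !actE qk ql.
Qed.

Lemma cls_count h n ns (i j : 'I_n) (a b : 'I_h) : i != j -> a != b ->
  (#|cls ns i j a b| * (n * n.-1) = #|msperm n ns| * (ns a * ns b))%N.
Proof.
move=> nij nab.
have E1 : (\sum_(s in msperm n ns) \sum_k \sum_l ((s k == a) && (s l == b) : nat)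
          = #|msperm n ns| * (ns a * ns b))%N.
  rewrite -sum_nat_const; apply: eq_bigr => s ms.
  have -> : (\sum_k \sum_l ((s k == a) && (s l == b) : nat) =
     (\sum_k (s k == a : nat)) * (\sum_l (s l == b : nat)))%N.
    rewrite big_distrl /=; apply: eq_bigr => k _; rewrite big_distrr /=.
    by apply: eq_bigr => l _; case: (s k == a); case: (s l == b).
  rewrite !sum_bool.
  move: ms; rewrite inE => /forallP ms.
  have Pa := eqP (ms a); have Pb := eqP (ms b).
  by rewrite -Pa -Pb; congr (_ * _); apply: eq_card => x; rewrite inE.
rewrite -E1 exchange_big /=.
rewrite (eq_bigr (fun k => \sum_(l : 'I_n) ((k != l) * #|cls ns i j a b|)%N)); last first.
  move=> k _; rewrite exchange_big /=; apply: eq_bigr => l _.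
  have -> : (\sum_(s in msperm n ns) ((s k == a) && (s l == b) : nat) = #|cls ns k l a b|)%N.
    rewrite big_mkcond /= (eq_bigr (fun s => ((s \in msperm n ns) && ((s k == a) && (s l == b)) : nat))); last by move=> s _; case: (s \in _).
    rewrite sum_bool; apply: eq_card => s; rewrite [RHS]inE; by [].
  have [Ekl|nkl] := eqVneq k l.
    subst l; rewrite mul0n; apply/eqP; rewrite cards_eq0; apply/eqP/setP => s; rewrite !inE.
    by apply/negbTE/and3P => -[_ /eqP Ha /eqP Hb]; move: nab; rewrite -Ha -Hb eqxx.
  by rewrite mul1n (cls_sym _ _ _ nij nkl).
rewrite (eq_bigr (fun k => n.-1 * #|cls ns i j a b|))%N; last first.
  move=> k _; rewrite -big_distrl /= sum_bool; congr (_ * _).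
  have := cardC1 k; rewrite card_ord => <-; apply: eq_card => l; rewrite !inE eq_sym //.
by rewrite big_const_ord iter_addn_0; ring.
Qed.

Definition Dp h n ns (i j : 'I_n) (a b : 'I_h) (t : word h n * 'I_n * 'I_n) : bool :=
  [&& t.1.1 \in msperm n ns, ~~ (t.1.1 j < t.1.1 i)%N, t.1.2 \in pos t.1.1 a
    & t.2 \in pos t.1.1 b].

Definition consT h n (i j : 'I_n) (t : word h n * 'I_n * 'I_n) : word h n :=
  construct t.1.1 i j t.1.2 t.2.

Definition Cf h n ns (i j : 'I_n) (a b : 'I_h) (s : word h n) : nat :=
  (\sum_t (Dp ns i j a b t && (consT i j t == s) : nat))%N.

Lemma sum_pick (T : finType) (b : bool) (c : T) :
  (\sum_(s : T) ((b && (c == s)) : nat))%N = b.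
Proof.
rewrite (bigD1 c) //= eqxx andbT big1 ?addn0 // => s /negPf.
by rewrite eq_sym => ->; rewrite andbF.
Qed.

Lemma Dp_cls h n ns (i j : 'I_n) (a b : 'I_h) t :
  i != j -> a != b -> Dp ns i j a b t -> consT i j t \in cls ns i j a b.
Proof.
case: t => [[p ist] jst] /= /eqP nij nab /and4P [ms _ ha hb].
move: ha hb; rewrite !inE => /eqP ha /eqP hb.
simpl in ha, hb, ms.
have nb : p jst <> p ist by rewrite ha hb => E; move: nab; rewrite E eqxx.
rewrite /consT /= cons_i // cons_j // ha hb !eqxx !andbT.
have [r ->] := cons_act nij nb; rewrite ms_actF.
by move: ms; rewrite inE.
Qed.

Lemma Cf_out h n ns (i j : 'I_n) (a b : 'I_h) s :
  i != j -> a != b -> s \notin cls ns i j a b -> Cf ns i j a b s = 0%N.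
Proof.
move=> nij nab ns_; rewrite /Cf big1 // => t _.
case D: (Dp ns i j a b t) => //=; case: eqP => // E.
by move: ns_; rewrite -E Dp_cls.
Qed.

Lemma Cf_inv h n ns (i j : 'I_n) (a b : 'I_h) s (r : {perm 'I_n}) :
  r i = i -> r j = j -> Cf ns i j a b (act s r) = Cf ns i j a b s.
Proof.
move=> ri rj; rewrite /Cf.
pose phi (t : word h n * 'I_n * 'I_n) := (act t.1.1 r, (r^-1)%g t.1.2, (r^-1)%g t.2).
have phi_inj : injective phi.
  case=> [[p1 k1] l1] [[p2 k2] l2] [] /act_inj -> /perm_inj -> /perm_inj -> //.
rewrite (reindex_inj phi_inj); apply: eq_bigr => -[[p ist] jst] _.
congr (nat_of_bool _); congr andb.
  rewrite /Dp /= ms_act !actE rj ri !pos_act !inE !permKV //.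
by rewrite /consT /= cons_equiv // (inj_eq (@act_inj _ _ r)).
Qed.

Lemma cls_mem h n ns (i j : 'I_n) (a b : 'I_h) s :
  s \in cls ns i j a b -> [/\ s \in msperm n ns, s i = a & s j = b].
Proof. by rewrite [s \in cls _ _ _ _ _]inE => /and3P [? /eqP ? /eqP ?]. Qed.

Lemma sum_ind (R : realType) (T : finType) (b : pred T) (F : T -> R) :
  (\sum_(x : T) (b x)%:R * F x = \sum_(x | b x) F x)%R.
Proof.
by rewrite [RHS]big_mkcond; apply: eq_bigr => x _; case: (b x); rewrite /= ?mul1r ?mul0r.
Qed.

Lemma fiber (R : realType) h n ns (i j : 'I_n) (a b : 'I_h) (g : word h n -> R) :
  i != j -> a != b ->
  (#|cls ns i j a b|%:R * \sum_t ((Dp ns i j a b t)%:R * g (consT i j t)) =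
   (\sum_t (Dp ns i j a b t : nat))%:R * \sum_(s in cls ns i j a b) g s)%R.
Proof.
move=> nij nab.
have E1 : (\sum_t ((Dp ns i j a b t)%:R * g (consT i j t)) =
           \sum_s ((Cf ns i j a b s)%:R * g s))%R.
  transitivity (\sum_t \sum_s
     (((Dp ns i j a b t && (consT i j t == s)) : nat)%:R * g s))%R.
    apply: eq_bigr => t _; rewrite (bigD1 (consT i j t)) //= eqxx andbT big1 ?addr0 //.
    by move=> s /negPf; rewrite eq_sym => ->; rewrite andbF mul0r.
  by rewrite exchange_big; apply: eq_bigr => s _; rewrite /Cf natr_sum mulr_suml.
have E2 : (\sum_t (Dp ns i j a b t : nat) = \sum_s Cf ns i j a b s)%N.
  by rewrite /Cf [RHS]exchange_big /=; apply: eq_bigr => t _; rewrite sum_pick.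
have [E0|[s0 H0]] := set_0Vmem (cls ns i j a b).
  by rewrite E0 cards0 big_set0 mul0r mulr0.
have EC : forall s, s \in cls ns i j a b -> Cf ns i j a b s = Cf ns i j a b s0.
  move=> s Hs; have [m0 i0 j0] := cls_mem H0; have [m1 i1 j1] := cls_mem Hs.
  have [r [ri rj ->]] := trans_ms m0 m1 (etrans i0 (esym i1)) (etrans j0 (esym j1)) nij.
  exact: Cf_inv.
rewrite E1 E2.
rewrite (eq_bigr (fun s => ((s \in cls ns i j a b) * Cf ns i j a b s0)%N)); last first.
  move=> s _; case: (boolP (s \in cls ns i j a b)) => Hs; first by rewrite EC // mul1n.
  by rewrite Cf_out.
rewrite (eq_bigr (fun s => ((s \in cls ns i j a b)%:R * ((Cf ns i j a b s0)%:R * g s)))%R); last first.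
  move=> s _; case: (boolP (s \in cls ns i j a b)) => Hs; first by rewrite EC // mul1r.
  by rewrite Cf_out //= !mul0r.
rewrite -big_distrl /= sum_bool natrM sum_ind -big_distrr /=.
by rewrite mulrA; congr (_%:R * _ * _)%R; apply: eq_card.
Qed.

Local Open Scope ring_scope.

Lemma sum_pair (R : realType) (A B : finType) (G : A * B -> R) :
  \sum_(w : A * B) G w = \sum_(a : A) \sum_(b : B) G (a, b).
Proof. by rewrite pair_bigA; apply: eq_bigr => -[a b]. Qed.

Definition Pw (R : realType) h n ns (p : word h n) : R :=
  (p \in msperm n ns)%:R / #|msperm n ns|%:R.
Definition Iw (R : realType) n (ij : 'I_n * 'I_n) : R :=
  (ij \in pairsI n)%:R / #|pairsI n|%:R.
Definition Jw (R : realType) h ns (ab : 'I_h * 'I_h) : R :=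
  (ab \in pairsJ h)%:R * ((ns ab.1)%:R * (ns ab.2)%:R) / Zw ns R.
Definition Kw (R : realType) h n (p : word h n) c k : R :=
  (k \in pos p c)%:R / #|pos p c|%:R.

Lemma Exp_gen (R : realType) h n ns (Y : Omega h n -> R) :
  Exp ns Y = \sum_p \sum_ij Pw R ns p * Iw R ij *
    (\sum_ab \sum_ist \sum_jst Jw R ns ab * Kw R p ab.1 ist * Kw R p ab.2 jst *
        Y (p, ij, ab, ist, jst)).
Proof.
rewrite /Exp; do 4 rewrite sum_pair.
apply: eq_bigr => p _; apply: eq_bigr => ij _; rewrite big_distrr; apply: eq_bigr => ab _.
rewrite big_distrr; apply: eq_bigr => ist _; rewrite big_distrr; apply: eq_bigr => jst _.
rewrite /mass /Pw /Iw /Jw /Kw /=; ring.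
Qed.

Lemma sumKw (R : realType) h n ns (p : word h n) c :
  (0 < ns c)%N -> p \in msperm n ns -> \sum_k Kw R p c k = 1.
Proof.
move=> nc ms; rewrite /Kw -mulr_suml -natr_sum sum_bool.
have Ec : #|pos p c| = ns c by move: ms; rewrite inE => /forallP/(_ c)/eqP.
have -> : #|(fun k => k \in pos p c)| = #|pos p c| by apply: eq_card.
by rewrite Ec divff // pnatr_eq0 -lt0n.
Qed.

Lemma sum3 (R : realType) h n ns (p : word h n) (X : R) :
  (forall a, (0 < ns a)%N) -> Zw ns R != 0 -> p \in msperm n ns ->
  \sum_ab \sum_ist \sum_jst Jw R ns ab * Kw R p ab.1 ist * Kw R p ab.2 jst * X = X.
Proof.
move=> Hpos Z0 ms.
transitivity (\sum_ab Jw R ns ab * X); last first.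
  rewrite -mulr_suml /Jw -mulr_suml sum_ind /Zw.
  by rewrite divff // mul1r.
apply: eq_bigr => ab _.
transitivity (\sum_ist Jw R ns ab * Kw R p ab.1 ist * X); last first.
  by rewrite -mulr_suml -big_distrr /= (@sumKw R h n ns p _ (Hpos _) ms) mulr1.
apply: eq_bigr => ist _.
transitivity (Jw R ns ab * Kw R p ab.1 ist * X * \sum_jst Kw R p ab.2 jst).
  by rewrite big_distrr; apply: eq_bigr => jst _ /=; ring.
by rewrite (@sumKw R h n ns p _ (Hpos _) ms) mulr1.
Qed.

Lemma Exp_marg (R : realType) h n ns (F : word h n -> R) :
  (forall a, (0 < ns a)%N) -> Zw ns R != 0 -> #|pairsI n| != 0%N ->
  Exp ns (fun w : Omega h n => F w.1.1.1.1) = \sum_p Pw R ns p * F p.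
Proof.
move=> Hpos Z0 I0; rewrite Exp_gen; apply: eq_bigr => p _.
case: (boolP (p \in msperm n ns)) => ms; last first.
  rewrite /Pw (negPf ms) !mul0r big1 // => ij _; by rewrite !mul0r.
rewrite (eq_bigr (fun ij => Pw R ns p * Iw R ij * F p)); last first.
  by move=> ij _ /=; rewrite sum3.
transitivity (Pw R ns p * F p * \sum_(ij : 'I_n * 'I_n) Iw R ij).
  by rewrite big_distrr; apply: eq_bigr => ij _ /=; ring.
rewrite /Iw -mulr_suml -natr_sum sum_bool.
have -> : #|(fun ij => ij \in pairsI n)| = #|pairsI n| by apply: eq_card.
by rewrite divff ?mul1r ?mulr1 // pnatr_eq0.
Qed.

Lemma card_pos h n ns (p : word h n) c : p \in msperm n ns -> #|pos p c| = ns c.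
Proof. by rewrite inE => /forallP/(_ c)/eqP. Qed.

Definition inner2 (R : realType) h n (G : word h n -> R) (p : word h n) (i j : 'I_n) : R :=
  \sum_(ab : 'I_h * 'I_h) (ab \in pairsJ h)%:R *
    \sum_ist \sum_jst ((ist \in pos p ab.1) && (jst \in pos p ab.2))%:R *
       G (construct p i j ist jst).

Lemma inner_eq (R : realType) h n ns (G : word h n -> R) p ij :
  (forall a, (0 < ns a)%N) -> Zw ns R != 0 -> p \in msperm n ns ->
  \sum_ab \sum_ist \sum_jst Jw R ns ab * Kw R p ab.1 ist * Kw R p ab.2 jst *
     G (pistar (p, ij, ab, ist, jst)) =
  if (p ij.2 < p ij.1)%N then G p else (Zw ns R)^-1 * inner2 G p ij.1 ij.2.
Proof.
move=> Hpos Z0 ms; rewrite /pistar /=; case: ifP => H; first exact: sum3.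
rewrite /inner2 mulr_sumr; apply: eq_bigr => ab _.
rewrite mulrA mulr_sumr; apply: eq_bigr => ist _; rewrite mulr_sumr; apply: eq_bigr => jst _.
rewrite /Jw /Kw !(card_pos _ ms).
have n1 : (ns ab.1)%:R != 0 :> R by rewrite pnatr_eq0 -lt0n.
have n2 : (ns ab.2)%:R != 0 :> R by rewrite pnatr_eq0 -lt0n.
case: (ab \in pairsJ h); case: (ist \in pos p ab.1); case: (jst \in pos p ab.2) => /=;
  field; rewrite ?n1 ?n2 ?Z0 //.
Qed.

Lemma split_cls (R : realType) h n ns (F : word h n -> R) (i j : 'I_n) :
  \sum_p ((p \in msperm n ns) && (p j < p i)%N)%:R * F p =
  \sum_(ab in pairsJ h) \sum_(p in cls ns i j ab.1 ab.2) F p.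
Proof.
transitivity (\sum_p \sum_(ab : 'I_h * 'I_h)
   ((((p \in msperm n ns) && (p j < p i)%N) && ((p i, p j) == ab)))%:R * F p).
  apply: eq_bigr => p _; rewrite (bigD1 (p i, p j)) //= eqxx andbT big1 ?addr0 //.
  by move=> ab /negPf; rewrite eq_sym => ->; rewrite andbF mul0r.
rewrite exchange_big /= -[in RHS]sum_ind; apply: eq_bigr => -[a b] _.
rewrite -[in RHS]sum_ind mulr_sumr; apply: eq_bigr => p _; rewrite mulrA -natrM mulnb.
congr (_%:R * _); rewrite [_ \in pairsJ h]inE [_ \in cls _ _ _ _ _]inE xpair_eqE /=.
case: (p i =P a) => [->|]; case: (p j =P b) => [->|] /=; rewrite ?andbF ?andbT //.
by case: (_ \in _); rewrite ?andbT ?andbF.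
Qed.

Lemma sum_pairN (A B : finType) (G : A * B -> nat) :
  (\sum_(w : A * B) G w = \sum_(a : A) \sum_(b : B) G (a, b))%N.
Proof. by rewrite pair_bigA; apply: eq_bigr => -[a b]. Qed.

Lemma Dsum h n ns (i j : 'I_n) (a b : 'I_h) :
  (\sum_t (Dp ns i j a b t : nat) =
   (\sum_(p : word h n) ((p \in msperm n ns) && ~~ (p j < p i)%N : nat)) * (ns a * ns b))%N.
Proof.
rewrite !sum_pairN big_distrl /=; apply: eq_bigr => p _.
rewrite /Dp /=; case: (boolP ((p \in msperm n ns) && ~~ (p j < p i)%N)) => [/andP [ms lt]|H].
  rewrite ms lt /= mul1n.
  transitivity (\sum_(ist : 'I_n) ((ist \in pos p a) : nat) * ns b)%N.
    apply: eq_bigr => ist _; rewrite -(card_pos b ms) -sum_bool big_distrr /=.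
    by apply: eq_bigr => jst _; rewrite -mulnb.
  by rewrite -big_distrl /= sum_bool -(card_pos a ms); congr (_ * _)%N; apply: eq_card.
rewrite [RHS]/= mul0n big1 // => ist _; rewrite big1 // => jst _.
by move: H; case: (p \in _); case: (_ < _)%N.
Qed.

Lemma S_conv (R : realType) h n ns (G : word h n -> R) (i j : 'I_n) (a b : 'I_h) :
  \sum_t (Dp ns i j a b t)%:R * G (consT i j t) =
  \sum_p ((p \in msperm n ns) && ~~ (p j < p i)%N)%:R *
     \sum_ist \sum_jst ((ist \in pos p a) && (jst \in pos p b))%:R *
        G (construct p i j ist jst).
Proof.
rewrite !sum_pair; apply: eq_bigr => p _; rewrite mulr_sumr; apply: eq_bigr => ist _.
rewrite mulr_sumr; apply: eq_bigr => jst _; rewrite mulrA -natrM mulnb /Dp /consT /=.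
by rewrite -!andbA.
Qed.

Lemma J_neq h (ab : 'I_h * 'I_h) : ab \in pairsJ h -> ab.1 != ab.2.
Proof. by rewrite inE => lt; rewrite eq_sym neq_ltn lt. Qed.

Lemma cls_countR (R : realType) h n ns (i j : 'I_n) (a b : 'I_h) :
  i != j -> a != b ->
  #|cls ns i j a b|%:R * (n * n.-1)%:R = #|msperm n ns|%:R * ((ns a)%:R * (ns b)%:R) :> R.
Proof. by move=> nij nab; rewrite -!natrM cls_count. Qed.

Lemma sum_cls_K (R : realType) h n ns (i j : 'I_n) : i != j ->
  (\sum_(ab in pairsJ h) #|cls ns i j ab.1 ab.2|%:R) * (n * n.-1)%:R =
  #|msperm n ns|%:R * Zw ns R :> R.
Proof.
move=> nij; rewrite mulr_suml /Zw mulr_sumr; apply: eq_bigr => ab Hab.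
by rewrite cls_countR // J_neq.
Qed.

Lemma Qrel (R : realType) h n ns (i j : 'I_n) : i != j ->
  (\sum_(p : word h n) ((p \in msperm n ns) && ~~ (p j < p i)%N : nat))%:R * (n * n.-1)%:R
  = #|msperm n ns|%:R * ((n * n.-1)%:R - Zw ns R) :> R.
Proof.
move=> nij.
have E1 : (#|msperm n ns| = \sum_(p : word h n) ((p \in msperm n ns) && (p j < p i)%N : nat)
    + \sum_(p : word h n) ((p \in msperm n ns) && ~~ (p j < p i)%N : nat))%N.
  have -> : #|msperm n ns| = (\sum_(p : word h n) ((p \in msperm n ns) : nat))%N.
    by rewrite sum_bool; apply: eq_card.
  rewrite -big_split; apply: eq_bigr => p _.
  by case: (p \in _); case: (_ < _)%N.
have E2 : (\sum_(p : word h n) ((p \in msperm n ns) && (p j < p i)%N : nat))%:R =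
    \sum_(ab in pairsJ h) #|cls ns i j ab.1 ab.2|%:R :> R.
  rewrite natr_sum (eq_bigr (fun p => ((p \in msperm n ns) && (p j < p i)%N)%:R * (1 : R))); last first.
    by move=> p _; rewrite mulr1.
  by rewrite split_cls; apply: eq_bigr => ab _; rewrite sumr_const.
have E3 := sum_cls_K R ns nij.
have E4 : #|msperm n ns|%:R = (\sum_(p : word h n) ((p \in msperm n ns) && (p j < p i)%N : nat))%:R
    + (\sum_(p : word h n) ((p \in msperm n ns) && ~~ (p j < p i)%N : nat))%:R :> R.
  by rewrite -natrD -E1.
rewrite E2 in E4.
set Q := (X in X * _ = _); set C := (\sum_(ab in pairsJ h) _) in E3 E4.
have -> : Q = #|msperm n ns|%:R - C by rewrite E4; ring.
rewrite mulrBl E3; ring.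
Qed.

Lemma S_val (R : realType) h n ns (G : word h n -> R) (i j : 'I_n) (ab : 'I_h * 'I_h) :
  (forall a, (0 < ns a)%N) -> i != j -> ab \in pairsJ h ->
  #|msperm n ns|%:R != 0 :> R -> (n * n.-1)%:R != 0 :> R ->
  \sum_p ((p \in msperm n ns) && ~~ (p j < p i)%N)%:R *
     \sum_ist \sum_jst ((ist \in pos p ab.1) && (jst \in pos p ab.2))%:R *
        G (construct p i j ist jst) =
  ((n * n.-1)%:R - Zw ns R) * \sum_(p in cls ns i j ab.1 ab.2) G p.
Proof.
move=> Hpos nij Hab M0 K0.
have nab := J_neq Hab.
have n0 : n%:R != 0 :> R by move: K0; rewrite natrM mulf_eq0 negb_or => /andP[].
have n1 : n.-1%:R != 0 :> R by move: K0; rewrite natrM mulf_eq0 negb_or => /andP[].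
have na : (ns ab.1)%:R != 0 :> R by rewrite pnatr_eq0 -lt0n.
have nb : (ns ab.2)%:R != 0 :> R by rewrite pnatr_eq0 -lt0n.
rewrite -S_conv.
have F := fiber ns G nij nab.
rewrite Dsum !natrM in F.
have CC := cls_countR R ns nij nab.
have QQ := Qrel R ns nij.
rewrite natrM in QQ CC.
have Hc : #|cls ns i j ab.1 ab.2|%:R =
    #|msperm n ns|%:R * ((ns ab.1)%:R * (ns ab.2)%:R) / (n%:R * n.-1%:R) :> R.
  by rewrite -CC; field; rewrite ?n0 ?n1.
rewrite Hc in F.
have HKZ : (n * n.-1)%:R - Zw ns R =
    (\sum_(p : word h n) ((p \in msperm n ns) && ~~ (p j < p i)%N : nat))%:R *
    (n%:R * n.-1%:R) / #|msperm n ns|%:R :> R.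
  by rewrite QQ natrM; field; rewrite ?M0.
rewrite HKZ.
set S := \sum_t _ in F *.
have -> : S = (#|msperm n ns|%:R * ((ns ab.1)%:R * (ns ab.2)%:R) / (n%:R * n.-1%:R) * S) *
   ((n%:R * n.-1%:R) / (#|msperm n ns|%:R * ((ns ab.1)%:R * (ns ab.2)%:R))).
  by field; rewrite ?n0 ?n1 ?M0 ?na ?nb.
rewrite F; field; by rewrite ?n0 ?n1 ?M0 ?na ?nb.
Qed.

Lemma T_ij (R : realType) h n ns (G : word h n -> R) (i j : 'I_n) :
  (forall a, (0 < ns a)%N) -> Zw ns R != 0 ->
  #|msperm n ns|%:R != 0 :> R -> (n * n.-1)%:R != 0 :> R -> i != j ->
  \sum_p Pw R ns p * (if (p j < p i)%N then G p else (Zw ns R)^-1 * inner2 G p i j) =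
  (n * n.-1)%:R / (Zw ns R * #|msperm n ns|%:R) *
     \sum_p ((p \in msperm n ns) && (p j < p i)%N)%:R * G p.
Proof.
move=> Hpos Z0 M0 K0 nij.
have EB : \sum_p ((p \in msperm n ns) && ~~ (p j < p i)%N)%:R * inner2 G p i j =
    ((n * n.-1)%:R - Zw ns R) * \sum_p ((p \in msperm n ns) && (p j < p i)%N)%:R * G p.
  rewrite split_cls mulr_sumr /inner2.
  under eq_bigr => p _ do rewrite mulr_sumr.
  rewrite exchange_big /= -[in RHS]sum_ind; apply: eq_bigr => ab _.
  transitivity ((ab \in pairsJ h)%:R * \sum_p ((p \in msperm n ns) && ~~ (p j < p i)%N)%:R *
     \sum_ist \sum_jst ((ist \in pos p ab.1) && (jst \in pos p ab.2))%:R *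
        G (construct p i j ist jst)).
    by rewrite mulr_sumr; apply: eq_bigr => p _; rewrite mulrCA.
  case: (boolP (ab \in pairsJ h)) => H; last by rewrite !mul0r.
  by rewrite S_val // !mul1r.
transitivity ((#|msperm n ns|%:R)^-1 *
  (\sum_p ((p \in msperm n ns) && (p j < p i)%N)%:R * G p +
   (Zw ns R)^-1 * \sum_p ((p \in msperm n ns) && ~~ (p j < p i)%N)%:R * inner2 G p i j)).
  rewrite (mulr_sumr _ _ _ (Zw ns R)^-1) -big_split [in RHS]mulr_sumr /=.
  apply: eq_bigr => p _; rewrite /Pw.
  case: (p j < p i)%N; case: (p \in msperm n ns) => /=; ring.
rewrite EB; field; by rewrite ?Z0 ?M0.
Qed.

Lemma inv_sum (R : realType) h n (p : word h n) :
  (Defs.inv p)%:R = \sum_(ij : 'I_n * 'I_n) (ij \in pairsI n)%:R * (p ij.2 < p ij.1)%N%:R :> R.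
Proof.
rewrite /Defs.inv.
have -> : #|[set ij : 'I_n * 'I_n | (ij.1 < ij.2)%N && (p ij.2 < p ij.1)%N]| =
   (\sum_(ij : 'I_n * 'I_n) ((ij.1 < ij.2)%N && (p ij.2 < p ij.1)%N : nat))%N.
  by rewrite sum_bool; apply: eq_card => ij; rewrite inE.
rewrite natr_sum; apply: eq_bigr => ij _; rewrite -natrM mulnb inE //.
Qed.

Lemma Zw_pos (R : realType) h (ns : 'I_h -> nat) : (2 <= h)%N -> (forall a, (0 < ns a)%N) -> Zw ns R != 0.
Proof.
move=> Hh Hpos.
have -> : Zw ns R = (\sum_(ab in pairsJ h) (ns ab.1 * ns ab.2))%N%:R.
  by rewrite natr_sum; apply: eq_bigr => ab _; rewrite natrM.
rewrite pnatr_eq0 -lt0n.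
have h1 : (1 < h)%N by [].
have h0 : (0 < h)%N by apply: ltn_trans h1.
rewrite (bigD1 (Ordinal h1, Ordinal h0)) ?inE //=.
by rewrite addn_gt0 muln_gt0 !Hpos.
Qed.

Lemma I_pos n : (2 <= n)%N -> #|pairsI n| != 0%N.
Proof.
move=> Hn; have n1 : (1 < n)%N by [].
have n0 : (0 < n)%N by apply: ltn_trans n1.
rewrite -lt0n; apply/card_gt0P; exists (Ordinal n0, Ordinal n1); rewrite inE.
by [].
Qed.

Theorem lemma2p8 (R : realType) (h n : nat) (ns : 'I_h -> nat)
  (Hh : (2 <= h)%N) (Hpos : forall a, (0 < ns a)%N)
  (Hsum : (\sum_(a < h) ns a)%N = n) (Hn : (4 <= n)%N)
  (f : R -> R) (Hf : continuous f) :
  Exp ns (fun w : Omega h n => W R w * f (W R w)) =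
  Exp ns (fun w : Omega h n => W R w) *
  Exp ns (fun w : Omega h n => f (Wstar R w)).
Proof.
have Z0 : Zw ns R != 0 := Zw_pos R Hh Hpos.
have Hn2 : (2 <= n)%N by apply: leq_trans Hn.
have I0 := I_pos Hn2.
have N0 : #|pairsI n|%:R != 0 :> R by rewrite pnatr_eq0.
have K0 : (n * n.-1)%:R != 0 :> R.
  by rewrite pnatr_eq0 muln_eq0 negb_or -!lt0n; apply/andP; split; move: Hn2; case: (n) => [|[|m]].
have n0 : n%:R != 0 :> R by move: K0; rewrite natrM mulf_eq0 negb_or => /andP[].
have n1 : n.-1%:R != 0 :> R by move: K0; rewrite natrM mulf_eq0 negb_or => /andP[].
pose G := fun p : word h n => f (Defs.inv p)%:R.
have EL : Exp ns (fun w : Omega h n => W R w * f (W R w)) =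
    \sum_p Pw R ns p * ((Defs.inv p)%:R * G p) :=
  Exp_marg (fun p : word h n => (Defs.inv p)%:R * G p) Hpos Z0 I0.
have EW : Exp ns (fun w : Omega h n => W R w) = \sum_p Pw R ns p * (Defs.inv p)%:R :=
  Exp_marg (fun p : word h n => (Defs.inv p)%:R) Hpos Z0 I0.
have [M0|M0] := eqVneq (#|msperm n ns|%:R : R) 0.
  have P0 : forall p : word h n, Pw R ns p = 0 by move=> p; rewrite /Pw M0 invr0 mulr0.
  rewrite EL EW !big1 ?mul0r // => p _; rewrite P0 mul0r //.
have Ef1 : Exp ns (fun w : Omega h n => f (Wstar R w)) =
  \sum_p \sum_ij Pw R ns p * Iw R ij *
    (if (p ij.2 < p ij.1)%N then G p else (Zw ns R)^-1 * inner2 G p ij.1 ij.2).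
  rewrite Exp_gen; apply: eq_bigr => p _; apply: eq_bigr => ij _.
  case: (boolP (p \in msperm n ns)) => ms; last by rewrite /Pw (negPf ms) !mul0r.
  congr (_ * _); exact: (inner_eq G ij Hpos Z0 ms).
have Hms : forall p : word h n, (p \in msperm n ns)%:R = #|msperm n ns|%:R * Pw R ns p.
  by move=> p; rewrite /Pw mulrC divfK.
have Ef2 : Exp ns (fun w : Omega h n => f (Wstar R w)) =
  (n * n.-1)%:R / (Zw ns R * #|msperm n ns|%:R) / #|pairsI n|%:R * #|msperm n ns|%:R *
  \sum_p Pw R ns p * ((Defs.inv p)%:R * G p).
  rewrite Ef1 exchange_big /=.
  transitivity (\sum_(ij : 'I_n * 'I_n) Iw R ij * ((n * n.-1)%:R / (Zw ns R * #|msperm n ns|%:R) *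
     \sum_p ((p \in msperm n ns) && (p ij.2 < p ij.1)%N)%:R * G p)).
    apply: eq_bigr => ij _.
    transitivity (Iw R ij * \sum_p Pw R ns p *
      (if (p ij.2 < p ij.1)%N then G p else (Zw ns R)^-1 * inner2 G p ij.1 ij.2)).
      by rewrite mulr_sumr; apply: eq_bigr => p _; rewrite mulrA (mulrC (Iw R ij)).
    case: (boolP (ij \in pairsI n)) => HI; last by rewrite /Iw (negPf HI) !mul0r.
    have nij : ij.1 != ij.2 by move: HI; rewrite inE => lt; apply/eqP => E; move: lt; rewrite E ltnn.
    by rewrite T_ij.
  transitivity (\sum_(ij : 'I_n * 'I_n) \sum_p
     (n * n.-1)%:R / (Zw ns R * #|msperm n ns|%:R) / #|pairsI n|%:R *
       ((ij \in pairsI n)%:R * ((p \in msperm n ns)%:R * (p ij.2 < p ij.1)%N%:R * G p))).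
    apply: eq_bigr => ij _; rewrite !mulr_sumr; apply: eq_bigr => p _.
    rewrite /Iw -mulnb natrM; ring.
  rewrite exchange_big /= mulr_sumr; apply: eq_bigr => p _.
  rewrite inv_sum (mulr_suml _ _ _ (G p)) (mulr_sumr _ _ _ (Pw R ns p)).
  rewrite (mulr_sumr _ _ _ ((n * n.-1)%:R / (Zw ns R * #|msperm n ns|%:R) / #|pairsI n|%:R * #|msperm n ns|%:R)).
  apply: eq_bigr => ij _.
  rewrite Hms; ring.
have EW2 : Exp ns (fun w : Omega h n => W R w) =
    #|pairsI n|%:R * Zw ns R / (n * n.-1)%:R.
  rewrite EW.
  transitivity (\sum_(ij : 'I_n * 'I_n) (ij \in pairsI n)%:R * ((#|msperm n ns|%:R : R)^-1 *
      \sum_p ((p \in msperm n ns) && (p ij.2 < p ij.1)%N)%:R * 1)).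
    under eq_bigr => p _ do rewrite inv_sum mulr_sumr.
    rewrite exchange_big; apply: eq_bigr => ij _.
    rewrite !mulr_sumr; apply: eq_bigr => p _.
    rewrite /Pw -mulnb natrM; ring.
  transitivity (\sum_(ij : 'I_n * 'I_n) (ij \in pairsI n)%:R * (Zw ns R / (n * n.-1)%:R)).
    apply: eq_bigr => ij _.
    case: (boolP (ij \in pairsI n)) => HI; last by rewrite !mul0r.
    have nij : ij.1 != ij.2 by move: HI; rewrite inE => lt; apply/eqP => E; move: lt; rewrite E ltnn.
    rewrite split_cls (eq_bigr (fun ab => #|cls ns ij.1 ij.2 ab.1 ab.2|%:R)); last first.
      by move=> ab _; rewrite sumr_const.
    have E := sum_cls_K R ns nij.
    set Cs := \sum_(ab in pairsJ h) _ in E *.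
    have -> : Cs = #|msperm n ns|%:R * Zw ns R / (n * n.-1)%:R.
      by rewrite -E; field; rewrite ?n0 ?n1.
    by field; rewrite ?n0 ?n1 ?M0.
  rewrite -mulr_suml -natr_sum sum_bool.
  have -> : #|(fun ij => ij \in pairsI n)| = #|pairsI n| by apply: eq_card.
  by rewrite mulrA.
rewrite EL EW2 Ef2; field.
by rewrite ?Z0 ?M0 ?N0 ?K0 ?n0 ?n1.
Qed.
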